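(* Let $\kappa$ be a regular infinite cardinal and $A,B$ Boolean algebras with $A$ a subalgebra of $B$. If $A$ is complete (not necessarily a complete subalgebra of $B$) and $B$ has the $\kappa$-FN, then $A$ has the $\kappa$-FN.
   Context: For an infinite cardinal $\kappa$, a Boolean algebra $B$ has the $\kappa$-Freese–Nation property ($\kappa$-FN) if there is a map $f:B\to[B]^{<\kappa}$ such that for all $a,b\in B$ with $a\le b$ there is $c\in f(a)\cap f(b)$ with $a\le c\le b$. *)

(* Defs.v *)
From HB Require Import structures.
From mathcomp Require Import all_boot all_order.
Set Implicit Arguments. Unset Strict Implicit. Unset Printing Implicit Defensive.
Import Order.TTheory.
Local Open Scope order_scope.

(* Boolean algebras are MathComp's complemented distributive lattices
   with top and bottom: [ctbDistrLatticeType d]. *)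

(* Cardinal comparison: |S| < |K|, i.e. there is no injection from K into S. *)
Definition lt_card (K : Type) (T : Type) (S : T -> Prop) : Prop :=
  ~ exists g : K -> T, injective g /\ forall k, S (g k).

Definition infinite_card (K : Type) : Prop :=
  exists g : nat -> K, injective g.

Definition regular_card (K : Type) : Prop :=
  forall (I T : Type) (F : I -> T -> Prop),
    lt_card K (fun _ : I => True) ->
    (forall i, lt_card K (F i)) ->
    lt_card K (fun t => exists i, F i t).

(* kappa-Freese-Nation property, kappa = |K|:
   f : B -> [B]^{<kappa} such that a <= b implies some c in f a ∩ f b
   with a <= c <= b. *)
Definition kFN (K : Type) (d : Order.disp_t) (B : ctbDistrLatticeType d) : Prop :=
  exists f : B -> B -> Prop,
    (forall a, lt_card K (f a)) /\
    (forall a b : B, a <= b -> exists c, [/\ f a c, f b c, a <= c & c <= b]).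

(* emb is an (injective) Boolean algebra embedding, so that A is
   (isomorphic to) a subalgebra of B. *)
Definition BA_embedding (d d' : Order.disp_t) (A : ctbDistrLatticeType d)
    (B : ctbDistrLatticeType d') (emb : A -> B) : Prop :=
  injective emb /\ [/\
      (forall x y, emb (x `&` y) = emb x `&` emb y),
      (forall x y, emb (x `|` y) = emb x `|` emb y),
      (forall x, emb (~` x) = ~` (emb x)),
      emb \bot = \bot & emb \top = \top].

Definition complete_BA (d : Order.disp_t) (A : ctbDistrLatticeType d) : Prop :=
  forall X : A -> Prop, exists s : A,
    (forall x, X x -> x <= s) /\ (forall u, (forall x, X x -> x <= u) -> s <= u).

(* Main.v *)
Require Import Defs.
From mathcomp Require Import all_boot all_order.
From Stdlib Require Import ClassicalEpsilon.
Import Order.TTheory.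
Local Open Scope order_scope.

Lemma emb_refl (d d' : Order.disp_t)
    (A : ctbDistrLatticeType d) (B : ctbDistrLatticeType d') (emb : A -> B) :
  BA_embedding emb -> forall a x : A, emb a <= emb x -> a <= x.
Proof.
move=> [inj [hm _ _ _ _]] a x h.
apply/meet_idPl; apply: inj; rewrite hm; exact/meet_idPl.
Qed.

Theorem lemma6p1 (K : Type) (d d' : Order.disp_t)
    (A : ctbDistrLatticeType d) (B : ctbDistrLatticeType d') (emb : A -> B) :
  infinite_card K -> regular_card K ->
  BA_embedding emb -> complete_BA A -> kFN K B -> kFN K A.
Proof.
move=> _ _ hE hC [f [hf1 hf2]].
pose L (c : B) := fun y : A => forall x, c <= emb x -> y <= x.
have hs : forall c, {s : A | (forall x, L c x -> x <= s) /\
              (forall u, (forall x, L c x -> x <= u) -> s <= u)}.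
  move=> c; apply: constructive_indefinite_description; exact: hC.
pose h c := proj1_sig (hs c).
exists (fun a y => exists c, f (emb a) c /\ y = h c); split.
  move=> a [G [Ginj HG]].
  have Hc : forall k, {c | f (emb a) c /\ G k = h c}.
    move=> k; apply: constructive_indefinite_description; exact: HG.
  apply: (hf1 (emb a)); exists (fun k => proj1_sig (Hc k)); split.
    move=> k1 k2 e; apply: Ginj.
    rewrite (proj2 (proj2_sig (Hc k1))) (proj2 (proj2_sig (Hc k2))) e //.
  by move=> k; case: (proj2_sig (Hc k)).
move=> a b ab.
have emab : emb a <= emb b.
  case: hE => _ [_ hj _ _ _]; apply/join_idPl.
  by rewrite -hj; congr emb; apply/join_idPl.
have [c [fa fb ac cb]] := hf2 _ _ emab.
exists (h c); split.
- by exists c.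
- by exists c.
- rewrite /h; case: (hs c) => s [s1 s2] /=; apply: s1 => x cx.
  apply: (@emb_refl _ _ _ _ _ hE); exact: (le_trans ac cx).
- rewrite /h; case: (hs c) => s0 [s1 s2] /=; apply: s2 => x Lx.
  exact: Lx.
Qed.
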